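(* Let $n\ge1$, let $K$ be the uniform Kasteleyn matrix of the Aztec diamond of size $n$, $G_n(\mathtt{w},\mathtt{b})=\sum_{x\in\mathtt{W},y\in\mathtt{B}}K^{-1}(x,y)w_1^{x_1}w_2^{x_2}b_1^{y_1}b_2^{y_2}$, and for $k,l\in\{0,1\}$ $$H^{k,l}_n(\mathtt{w},\mathtt{b})=\sum_{\substack{1\le x_1\le 2n-1,\ x_1\text{ odd}\\1\le y_2\le 2n-1,\ y_2\text{ odd}}}K^{-1}((x_1,2nk),(2nl,y_2))\,w_1^{x_1}w_2^{2nk}b_1^{2nl}b_2^{y_2}.$$ Then, writing $H^{k,l}_n=H^{k,l}_n(\mathtt{w},\mathtt{b})$ and $C(r_1,r_2)=1+r_1^2r_2^2+\mathrm{i}(r_1^2+r_2^2)$, $$\begin{aligned}G_n(\mathtt{w},\mathtt{b})=&\ \frac{w_1w_2^2b_2f_{n+1}(w_1^2b_1^2)f_n(w_2^2b_2^2)}{C(w_1,w_2)}\\&+(1+\mathrm{i}w_1^2)\frac{(1+\mathrm{i}b_2^2)H^{0,0}_n+b_1^2\big(b_2w_1f_n(b_1^2w_1^2)+(\mathrm{i}+b_2^2)H^{0,1}_n\big)}{C(w_1,w_2)C(b_1,b_2)}\\&+(\mathrm{i}+w_1^2)w_2^2\frac{b_1^2b_2^{2n+1}w_1w_2^{2n}f_n(b_1^2w_1^2)+(1+\mathrm{i}b_2^2)H^{1,0}_n+b_1^2(\mathrm{i}+b_2^2)H^{1,1}_n}{C(w_1,w_2)C(b_1,b_2)}.\end{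aligned}$$
   Context: $\mathrm{i}=\sqrt{-1}$. $\mathtt{W}=\{(x_1,x_2): x_1\text{ odd},\ x_2\text{ even},\ 1\le x_1\le 2n-1,\ 0\le x_2\le 2n\}$, $\mathtt{B}=\{(x_1,x_2): x_1\text{ even},\ x_2\text{ odd},\ 0\le x_1\le 2n,\ 1\le x_2\le 2n-1\}$, $e_1=(1,1)$, $e_2=(-1,1)$. The uniform Kasteleyn matrix has rows indexed by $\mathtt{B}$, columns by $\mathtt{W}$, and $K(x,y)=1$ if $x-y=\pm e_1$, $K(x,y)=\mathrm{i}$ if $x-y=\pm e_2$, $0$ otherwise. $f_n(t)=(1-t^n)/(1-t)$. *)

(* Defs.v *)
From HB Require Import structures.
From mathcomp Require Import all_boot all_order all_algebra.
Set Implicit Arguments. Unset Strict Implicit. Unset Printing Implicit Defensive.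
Import Order.TTheory GRing.Theory Num.Theory.
Local Open Scope ring_scope.

(* Common index type for both colour classes: pairs (a, c), a < n, c <= n. *)
Definition Idx (n : nat) : finType := ('I_n * 'I_n.+1)%type.

(* White vertex (a,c) |-> (2a+1, 2c) : x1 odd in [1,2n-1], x2 even in [0,2n]. *)
Definition wpt (n : nat) (p : Idx n) : nat * nat :=
  ((2 * p.1 + 1)%N, (2 * p.2)%N).

(* Black vertex (a,c) |-> (2c, 2a+1) : x1 even in [0,2n], x2 odd in [1,2n-1]. *)
Definition bpt (n : nat) (p : Idx n) : nat * nat :=
  ((2 * p.2)%N, (2 * p.1 + 1)%N).

(* Uniform Kasteleyn weight K(x,y) for x black, y white:
   1 if x - y = +-e1 = +-(1,1), i if x - y = +-e2 = +-(-1,1), 0 otherwise. *)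
Definition kast (F : numClosedFieldType) (x y : nat * nat) : F :=
  let d1 : int := (x.1%:Z - y.1%:Z)%R in
  let d2 : int := (x.2%:Z - y.2%:Z)%R in
  if ((d1 == 1) && (d2 == 1)) || ((d1 == -1) && (d2 == -1)) then 1
  else if ((d1 == -1) && (d2 == 1)) || ((d1 == 1) && (d2 == -1)) then 'i
  else 0.

Definition KastMx (F : numClosedFieldType) (n : nat) : 'M[F]_#|Idx n| :=
  \matrix_(i, j) kast F (bpt (enum_val i)) (wpt (enum_val j)).

(* K^{-1}(x, y) with x white, y black. *)
Definition Kinv (F : numClosedFieldType) (n : nat) (x y : Idx n) : F :=
  invmx (KastMx F n) (enum_rank x) (enum_rank y).

(* f_n(t) = (1 - t^n)/(1 - t), read as the polynomial 1 + t + ... + t^(n-1). *)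
Definition fpoly (F : numClosedFieldType) (n : nat) (t : F) : F :=
  \sum_(i < n) t ^+ i.

Definition Cfun (F : numClosedFieldType) (r1 r2 : F) : F :=
  1 + r1 ^+ 2 * r2 ^+ 2 + 'i * (r1 ^+ 2 + r2 ^+ 2).

Definition Gn (F : numClosedFieldType) (n : nat) (w1 w2 b1 b2 : F) : F :=
  \sum_(x : Idx n) \sum_(y : Idx n)
    Kinv F x y * w1 ^+ (wpt x).1 * w2 ^+ (wpt x).2
               * b1 ^+ (bpt y).1 * b2 ^+ (bpt y).2.

(* H^{k,l}_n: x = (x1, 2nk) white, y = (2nl, y2) black, x1, y2 odd. *)
Definition Hn (F : numClosedFieldType) (n : nat) (k l : bool) (w1 w2 b1 b2 : F) : F :=
  \sum_(a : 'I_n) \sum_(a' : 'I_n)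
    Kinv F (a, if k then ord_max else ord0) (a', if l then ord_max else ord0)
      * w1 ^+ (2 * a + 1) * w2 ^+ (2 * n * k) * b1 ^+ (2 * n * l)
      * b2 ^+ (2 * a' + 1).

(* Main.v *)
Require Import Defs.
From HB Require Import structures.
From mathcomp Require Import all_boot all_order all_algebra.
From mathcomp Require Import zify ring lra.
Import Order.TTheory GRing.Theory Num.Theory.
Local Open Scope ring_scope.



Section S.
Variable F : numClosedFieldType.

Definition ind (b : bool) (z : F) : F := if b then z else 0.

Lemma mul_ind x b z : x * ind b z = ind b (x * z).
Proof. by case: b; rewrite /ind ?mulr0. Qed.

Lemma sum_indb (I : finType) b (f : I -> F) : \sum_i ind b (f i) = ind b (\sum_i f i).
Proof. by case: b; rewrite /ind // big1. Qed.

Lemma ind_ind b b' z : ind b (ind b' z) = ind (b && b') z.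
Proof. by case: b; case: b'. Qed.

Lemma sum_ind (N Q : nat) (h : nat -> F) :
  \sum_(q < N) ind ((q:nat) == Q)%N (h q) = ind (Q < N)%N (h Q).
Proof.
elim: N => [|N IH]; first by rewrite big_ord0.
rewrite big_ord_recr /= IH /ind.
case: (ltngtP Q N) => H; rewrite ?addr0 ?add0r; case: ifP => //; try lia.
by move=> _; rewrite H.
Qed.

Lemma sum2_ind (n N P Q : nat) (g : nat -> nat -> F) :
  \sum_(p < n) \sum_(q < N) ind ((q:nat) == Q)%N (ind ((p:nat) == P)%N (g p q))
  = ind ((P < n) && (Q < N))%N (g P Q).
Proof.
under eq_bigr => p _ do rewrite (sum_ind N Q (fun q => ind ((p:nat) == P)%N (g p q))).
rewrite sum_indb (sum_ind n P (fun p => g p Q)) ind_ind andbC //.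
Qed.
End S.

Section T.
Variable F : numClosedFieldType.
Local Notation ind := (@ind F).

Lemma kastE1 (p q a c : nat) :
  kast F ((2 * q)%N, (2 * p + 1)%N) ((2 * a + 1)%N, (2 * c)%N) =
  ind (q == a.+1)%N (ind (p == c)%N 1) + ind (0 < c)%N (ind (q == a)%N (ind (p == c.-1)%N 1))
  + ind (q == a)%N (ind (p == c)%N 'i) + ind (0 < c)%N (ind (q == a.+1)%N (ind (p == c.-1)%N 'i)).
Proof.
rewrite /kast /=.
have -> : (((2 * q)%N%:Z - (2 * a + 1)%N%:Z)%R == 1) = (q == a.+1)%N.
  by apply/eqP/eqP; lia.
have -> : (((2 * q)%N%:Z - (2 * a + 1)%N%:Z)%R == -1) = (q == a)%N.
  by apply/eqP/eqP; lia.
have -> : (((2 * p + 1)%N%:Z - (2 * c)%N%:Z)%R == 1) = (p == c)%N.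
  by apply/eqP/eqP; lia.
have -> : (((2 * p + 1)%N%:Z - (2 * c)%N%:Z)%R == -1) = (p.+1 == c)%N.
  by apply/eqP/eqP; lia.
rewrite /ind; case: c => [|c] /=;
repeat (case: eqP => ? /=); try lia; ring.
Qed.

Lemma kastE2 (p q a c : nat) :
  kast F ((2 * q)%N, (2 * p + 1)%N) ((2 * a + 1)%N, (2 * c)%N) =
  ind (0 < q)%N (ind (c == p)%N (ind (a == q.-1)%N 1)) + ind (c == p.+1)%N (ind (a == q)%N 1)
  + ind (c == p)%N (ind (a == q)%N 'i) + ind (0 < q)%N (ind (c == p.+1)%N (ind (a == q.-1)%N 'i)).
Proof.
rewrite /kast /=.
have -> : (((2 * q)%N%:Z - (2 * a + 1)%N%:Z)%R == 1) = (q == a.+1)%N.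
  by apply/eqP/eqP; lia.
have -> : (((2 * q)%N%:Z - (2 * a + 1)%N%:Z)%R == -1) = (q == a)%N.
  by apply/eqP/eqP; lia.
have -> : (((2 * p + 1)%N%:Z - (2 * c)%N%:Z)%R == 1) = (p == c)%N.
  by apply/eqP/eqP; lia.
have -> : (((2 * p + 1)%N%:Z - (2 * c)%N%:Z)%R == -1) = (p.+1 == c)%N.
  by apply/eqP/eqP; lia.
rewrite /ind; case: q => [|q] /=;
repeat (case: eqP => ? /=); try lia; ring.
Qed.
End T.

Section U.
Variable F : numClosedFieldType.
Local Notation ind := (@ind F).

Lemma sumIdx n (f : Idx n -> F) : \sum_y f y = \sum_(p < n) \sum_(q < n.+1) f (p, q).
Proof. by rewrite pair_bigA; apply: eq_bigr => -[]. Qed.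

Lemma bsum n (gg : nat -> nat -> F) (a : 'I_n) (c : 'I_n.+1) :
  \sum_(y : Idx n) gg y.1 y.2 * kast F (bpt y) (wpt (a, c)) =
  ind (c < n)%N (gg c a.+1 + 'i * gg c a) + ind (0 < c)%N (gg c.-1 a + 'i * gg c.-1 a.+1).
Proof.
rewrite sumIdx.
under eq_bigr => p _ do under eq_bigr => q _ do
  rewrite /bpt /wpt /= kastE1 !mulrDr !(@mul_ind F).
under eq_bigr => p _ do rewrite !big_split /= !(@sum_indb F).
rewrite !big_split /= !(@sum_indb F).
rewrite (@sum2_ind F n n.+1 c a.+1 (fun p q => gg p q * 1)).
rewrite (@sum2_ind F n n.+1 c.-1 a (fun p q => gg p q * 1)).
rewrite (@sum2_ind F n n.+1 c a (fun p q => gg p q * 'i)).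
rewrite (@sum2_ind F n n.+1 c.-1 a.+1 (fun p q => gg p q * 'i)).
have ha := ltn_ord a; have hc := ltn_ord c.
rewrite /ind; case: (ltnP c n) => H1; case: (ltnP 0 c) => H2;
  repeat (case: ifP => ? /=); try lia; ring.
Qed.

Lemma wsum n (hh : nat -> nat -> F) (p : 'I_n) (q : 'I_n.+1) :
  \sum_(x : Idx n) kast F (bpt (p, q)) (wpt x) * hh x.1 x.2 =
  ind (0 < q)%N (hh q.-1 p + 'i * hh q.-1 p.+1) + ind (q < n)%N (hh q p.+1 + 'i * hh q p).
Proof.
rewrite sumIdx.
under eq_bigr => a _ do under eq_bigr => c _ do
  rewrite /bpt /wpt /= kastE2 !mulrDl mulrC (mulrC (ind _ _)) (mulrC (ind _ _)) (mulrC (ind _ _)) !(@mul_ind F).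
under eq_bigr => a _ do rewrite !big_split /= !(@sum_indb F).
rewrite !big_split /= !(@sum_indb F).
rewrite (@sum2_ind F n n.+1 q.-1 p (fun a c => hh a c * 1)).
rewrite (@sum2_ind F n n.+1 q p.+1 (fun a c => hh a c * 1)).
rewrite (@sum2_ind F n n.+1 q p (fun a c => hh a c * 'i)).
rewrite (@sum2_ind F n n.+1 q.-1 p.+1 (fun a c => hh a c * 'i)).
have hp := ltn_ord p; have hq := ltn_ord q.
rewrite /ind; case: (ltnP q n) => H1; case: (ltnP 0 q) => H2;
  repeat (case: ifP => ? /=); try lia; ring.
Qed.
End U.



Section K.
Variable F : numClosedFieldType.

Definition Dop (f : nat -> F) : nat -> F := fun a => f a.+1 + 'i * f a.
Fixpoint Dk (k : nat) (f : nat -> F) : nat -> F :=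
  if k is k'.+1 then Dk k' (Dop f) else f.

Lemma Dk_loc k : forall f g a, (forall b, (a <= b)%N -> (b <= a + k)%N -> f b = g b) ->
  Dk k f a = Dk k g a.
Proof.
elim: k => [|k IH] f g a H /=; first by apply: H; lia.
apply: IH => b H1 H2; rewrite /Dop !H //; lia.
Qed.

Lemma Dk_lin k : forall f x y a,
  Dk k (fun b => x * f b + y * f b.+1) a = x * Dk k f a + y * Dk k f a.+1.
Proof.
elim: k => [|k IH] f x y a //=.
rewrite -IH; apply: Dk_loc => b _ _; rewrite /Dop; ring.
Qed.

Lemma Dk_geo k : forall g c0 a, (forall b, (a <= b)%N -> (b <= a + k)%N -> g b = c0 * 'i ^+ b) ->
  Dk k g a = (2 * 'i) ^+ k * c0 * 'i ^+ a.
Proof.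
elim: k => [|k IH] g c0 a H /=; first by rewrite H ?expr0 ?mul1r //; lia.
rewrite (IH _ (2 * 'i * c0)) ?exprS; first ring.
move=> b H1 H2; rewrite /Dop !H ?exprS; first ring; lia.
Qed.

Lemma hi : 'i * 'i = -1 :> F.
Proof. by rewrite -expr2 sqrCi. Qed.

Lemma Zlem N g k : (forall a, (a < N)%N -> g a + 'i * g a.+1 = 0) ->
  Dk k g 0 = 0 -> (k <= N)%N -> forall q, (q <= N)%N -> g q = 0.
Proof.
move=> T D kN.
have G : forall b, (b <= N)%N -> g b = g 0%N * 'i ^+ b.
  elim=> [|b IH] hb; first by rewrite expr0 mulr1.
  have E := T b hb.
  have -> : g b.+1 = -'i * (g b + 'i * g b.+1) + ('i * 'i + 1) * g b.+1 + 'i * g b by ring.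
  rewrite E hi IH; last lia.
  rewrite exprS; ring.
rewrite (@Dk_geo k g (g 0%N) 0%N) in D; last first.
  move=> b _ H; apply: G; lia.
have g0 : g 0%N = 0.
  move/eqP: D; rewrite expr0 mulr1 mulf_eq0 expf_eq0 mulf_eq0 pnatr_eq0 (negbTE (neq0Ci F)) /=.
  by rewrite andbF => /eqP.
by move=> q hq; rewrite G // g0 mul0r.
Qed.

Definition indK (b : bool) (z : F) : F := if b then z else 0.

Lemma kerlem N (u : nat -> nat -> F) : (0 < N)%N ->
  (forall a c, (a < N)%N -> (c <= N)%N ->
     indK (c < N)%N (u c a.+1 + 'i * u c a) + indK (0 < c)%N (u c.-1 a + 'i * u c.-1 a.+1) = 0) ->
  forall p q, (p < N)%N -> (q <= N)%N -> u p q = 0.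
Proof.
move=> N0 E.
have E0 : forall a, (a < N)%N -> u 0%N a.+1 + 'i * u 0%N a = 0.
  move=> a ha; have := E a 0%N ha (leq0n _); rewrite /indK N0 /= => <-; ring.
have Ec : forall c a, (0 < c)%N -> (c < N)%N -> (a < N)%N ->
    Dop (u c) a = - (u c.-1 a + 'i * u c.-1 a.+1).
  move=> c a h1 h2 ha; have := E a c ha (ltnW h2); rewrite /indK h1 h2 /Dop => H.
  apply/eqP; rewrite -subr_eq0 opprK; apply/eqP; rewrite -H; ring.
have EN : forall a, (a < N)%N -> u N.-1 a + 'i * u N.-1 a.+1 = 0.
  move=> a ha; have := E a N ha (leqnn _); rewrite /indK ltnn N0 /= => <-; ring.
have A : forall p, (p < N)%N -> forall a, (a + p.+1 <= N)%N -> Dk p.+1 (u p) a = 0.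
  elim=> [|p IH] hp a ha.
    rewrite /= /Dop E0 //; lia.
  change (Dk p.+1 (Dop (u p.+1)) a = 0).
  rewrite (@Dk_loc p.+1 _ (fun b => (-1) * u p b + (-'i) * u p b.+1)); last first.
    move=> b h1 h2; rewrite Ec //; (ring || lia).
  rewrite Dk_lin !IH; (ring || lia).
have B : forall j, (j < N)%N -> forall q, (q <= N)%N -> u (N.-1 - j)%N q = 0.
  elim=> [|j IH] hj.
    rewrite subn0; apply: (@Zlem N (u N.-1) N) => //.
    have := A N.-1 _ 0%N; rewrite prednK //; apply; lia.
  set p := (N.-1 - j.+1)%N.
  have Hp : p.+1 = (N.-1 - j)%N by rewrite /p; lia.
  apply: (@Zlem N (u p) p.+1); last lia.
  - move=> a ha.
    have H := Ec p.+1 a (ltn0Sn _) ltac:(lia) ha.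
    rewrite /Dop /= Hp !IH in H; try lia.
    by apply/eqP; rewrite -oppr_eq0 -H mulr0 addr0.
  - apply: A; lia.
move=> p q hp hq.
have -> : p = (N.-1 - (N.-1 - p))%N by lia.
apply: B => //; lia.
Qed.
End K.



Section M.
Variable F : numClosedFieldType.

Lemma sum_rank n (f : 'I_#|Idx n| -> F) : \sum_k f k = \sum_(x : Idx n) f (enum_rank x).
Proof.
rewrite (reindex enum_rank) //; exists enum_val => x _; [exact: enum_rankK | exact: enum_valK].
Qed.

Lemma KastE n y x : KastMx F n (enum_rank y) (enum_rank x) = kast F (bpt y) (wpt x).
Proof. by rewrite mxE !enum_rankK. Qed.

Lemma KM n : KastMx F n \in unitmx -> forall y y0,
  \sum_x kast F (bpt y) (wpt x) * Kinv F (n:=n) x y0 = (y == y0)%:R.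
Proof.
move=> U y y0.
have := congr1 (fun M : 'M[F]_#|Idx _| => M (enum_rank y) (enum_rank y0)) (mulmxV U).
rewrite /= !mxE (inj_eq enum_rank_inj) => <-.
rewrite sum_rank; apply: eq_bigr => x _; by rewrite KastE.
Qed.

Lemma MK n : KastMx F n \in unitmx -> forall x x0,
  \sum_y Kinv F (n:=n) x y * kast F (bpt y) (wpt x0) = (x == x0)%:R.
Proof.
move=> U x x0.
have := congr1 (fun M : 'M[F]_#|Idx _| => M (enum_rank x) (enum_rank x0)) (mulVmx U).
rewrite /= !mxE (inj_eq enum_rank_inj) => <-.
rewrite sum_rank; apply: eq_bigr => y _; by rewrite KastE.
Qed.

Lemma unitK m : KastMx F m.+1 \in unitmx.
Proof.
rewrite -row_free_unit -kermx_eq0.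
set B := kermx (KastMx F m.+1).
have HB := mulmx_ker (KastMx F m.+1); rewrite -/B in HB.
apply/eqP/matrixP => r k; rewrite [RHS]mxE.
pose u (p q : nat) : F := B r (enum_rank ((inord p, inord q) : Idx m.+1)).
have Hu : forall y : Idx m.+1, B r (enum_rank y) = u y.1 y.2.
  by case=> p q; rewrite /u !inord_val.
have E : forall a c, (a < m.+1)%N -> (c <= m.+1)%N ->
    @indK F (c < m.+1)%N (u c a.+1 + 'i * u c a) + @indK F (0 < c)%N (u c.-1 a + 'i * u c.-1 a.+1) = 0.
  move=> a c ha hc.
  have := congr1 (fun M : 'M[F]_#|Idx _| => M r (enum_rank ((Ordinal ha, Ordinal (hc : (c < m.+2)%N)) : Idx m.+1))) HB.
  rewrite /= !mxE sum_rank => H.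
  rewrite (eq_bigr (fun y : Idx m.+1 => u y.1 y.2 * kast F (bpt y) (wpt ((Ordinal ha, Ordinal (hc : (c < m.+2)%N)) : Idx m.+1)))) in H; last first.
    by move=> y _; rewrite KastE Hu.
  by rewrite bsum in H.
rewrite -(enum_valK k) Hu; apply: (@kerlem F m.+1) => //.
all: case: (enum_val k) => p q /=; first [exact: ltn_ord | rewrite -ltnS; exact: ltn_ord].
Qed.
End M.



Section Main.
Variable F : numClosedFieldType.
Variable n : nat.
Hypothesis n1 : (1 <= n)%N.
Variables w1 w2 b1 b2 : F.
Local Notation ind := (@ind F).
Local Notation X1 := (w1 ^+ 2).
Local Notation X2 := (w2 ^+ 2).
Local Notation Y1 := (b1 ^+ 2).
Local Notation Y2 := (b2 ^+ 2).
Local Notation Ki := (@Kinv F n).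

Definition Wf (x : Idx n) := w1 * X1 ^+ x.1 * X2 ^+ x.2.
Definition Vf (y : Idx n) := X1 ^+ y.2 * w2 * X2 ^+ y.1.
Definition Bf (y : Idx n) := Y1 ^+ y.2 * b2 * Y2 ^+ y.1.
Definition Uf (x : Idx n) := b1 * Y1 ^+ x.1 * Y2 ^+ x.2.
Definition bndw (x : Idx n) := ind (x.2 == 0%N :> nat) (w1 * X1 ^+ x.1 * (1 + 'i * X1))
  + ind (x.2 == n :> nat) (('i + X1) * X2 * (w1 * X1 ^+ x.1 * X2 ^+ n)).
Definition bndb (y : Idx n) := ind (y.2 == 0%N :> nat) ((1 + 'i * Y2) * (b2 * Y2 ^+ y.1))
  + ind (y.2 == n :> nat) (Y1 * ('i + Y2) * (Y1 ^+ n * b2 * Y2 ^+ y.1)).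

Lemma nbw (x : Idx n) :
  w1 * w2 * \sum_y Vf y * kast F (bpt y) (wpt x) = Cfun w1 w2 * Wf x - bndw x.
Proof.
case: x => a c.
rewrite (@bsum F n (fun p q => X1 ^+ q * w2 * X2 ^+ p)) /Wf /bndw /Cfun /ind /=.
case: c => [[|k] hk] /=.
  have -> : (0%N == n) = false by lia.
  rewrite n1 !exprS; ring.
case: (ltnP k.+1 n) => H1.
  have -> : (k.+1 == n) = false by lia.
  rewrite !exprS; ring.
have -> : (k.+1 == n) = true by lia.
have e' : X2 ^+ n = X2 * X2 ^+ k by rewrite (_ : n = k.+1) ?exprS //; lia.
rewrite e' !exprS; ring.
Qed.

Lemma nbb (y : Idx n) :
  b1 * b2 * \sum_x kast F (bpt y) (wpt x) * Uf x = Cfun b1 b2 * Bf y - bndb y.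
Proof.
case: y => p q.
rewrite (@wsum F n (fun a c => b1 * Y1 ^+ a * Y2 ^+ c)) /Bf /bndb /Cfun /ind /=.
case: q => [[|k] hk] /=.
  have -> : (0%N == n) = false by lia.
  rewrite n1 !exprS; ring.
case: (ltnP k.+1 n) => H1.
  have -> : (k.+1 == n) = false by lia.
  rewrite !exprS; ring.
have -> : (k.+1 == n) = true by lia.
have e' : Y1 ^+ n = Y1 * Y1 ^+ k by rewrite (_ : n = k.+1) ?exprS //; lia.
rewrite e' !exprS; ring.
Qed.

Hypothesis U : KastMx F n \in unitmx.

Lemma sum_delta (f : Idx n -> F) y0 : \sum_y f y * (y == y0)%:R = f y0.
Proof.
rewrite (bigD1 y0) //= eqxx mulr1 big1 ?addr0 // => y /negbTE ->; by rewrite mulr0.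
Qed.

Lemma sum_delta' (f : Idx n -> F) y0 : \sum_y (y0 == y)%:R * f y = f y0.
Proof.
rewrite (bigD1 y0) //= eqxx mul1r big1 ?addr0 // => y; rewrite eq_sym => /negbTE ->; by rewrite mul0r.
Qed.

Lemma L1 y0 : Cfun w1 w2 * \sum_x Wf x * Ki x y0 = w1 * w2 * Vf y0 + \sum_x bndw x * Ki x y0.
Proof.
have H1 : w1 * w2 * Vf y0 = \sum_x (Cfun w1 w2 * Wf x - bndw x) * Ki x y0.
  transitivity (w1 * w2 * \sum_y Vf y * \sum_x kast F (bpt y) (wpt x) * Ki x y0).
    by congr (_ * _); under eq_bigr => y _ do rewrite (@KM F n U); rewrite sum_delta.
  under eq_bigr => y _ do rewrite mulr_sumr.
  rewrite exchange_big mulr_sumr; apply: eq_bigr => x _.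
  rewrite -nbw mulr_sumr mulr_suml mulr_sumr; apply: eq_bigr => y _; ring.
suff E : Cfun w1 w2 * \sum_x Wf x * Ki x y0 - \sum_x bndw x * Ki x y0 = w1 * w2 * Vf y0.
  by rewrite -E; ring.
rewrite H1 mulr_sumr -sumrB; apply: eq_bigr => x _; ring.
Qed.

Lemma L2 x0 : Cfun b1 b2 * \sum_y Ki x0 y * Bf y = b1 * b2 * Uf x0 + \sum_y Ki x0 y * bndb y.
Proof.
have H1 : b1 * b2 * Uf x0 = \sum_y Ki x0 y * (Cfun b1 b2 * Bf y - bndb y).
  transitivity (b1 * b2 * \sum_x (\sum_y Ki x0 y * kast F (bpt y) (wpt x)) * Uf x).
    by congr (_ * _); under eq_bigr => x _ do rewrite (@MK F n U); rewrite sum_delta'.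
  under eq_bigr => x _ do rewrite mulr_suml.
  rewrite exchange_big mulr_sumr; apply: eq_bigr => y _.
  rewrite -nbb mulr_sumr mulr_sumr mulr_sumr; apply: eq_bigr => x _; ring.
suff E : Cfun b1 b2 * \sum_y Ki x0 y * Bf y - \sum_y Ki x0 y * bndb y = b1 * b2 * Uf x0.
  by rewrite -E; ring.
rewrite H1 mulr_sumr -sumrB; apply: eq_bigr => y _; ring.
Qed.

Lemma ex1 (z : F) m : z ^+ (2 * m + 1) = z * (z ^+ 2) ^+ m.
Proof. by rewrite exprD exprM expr1 mulrC. Qed.
Lemma ex2 (z : F) m : z ^+ (2 * m) = (z ^+ 2) ^+ m.
Proof. by rewrite exprM. Qed.

Lemma GnE : Gn n w1 w2 b1 b2 = \sum_x \sum_y Ki x y * Wf x * Bf y.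
Proof.
rewrite /Gn; apply: eq_bigr => x _; apply: eq_bigr => y _.
rewrite /Wf /Bf /wpt /bpt /= !ex1 !ex2; ring.
Qed.

Definition S0 := \sum_y Bf y * Vf y.

Lemma G2 : Cfun w1 w2 * Cfun b1 b2 * Gn n w1 w2 b1 b2 =
  Cfun b1 b2 * (w1 * w2 * S0) + \sum_x bndw x * (b1 * b2 * Uf x + \sum_y Ki x y * bndb y).
Proof.
rewrite GnE.
have G' : \sum_x \sum_y Ki x y * Wf x * Bf y = \sum_y Bf y * (\sum_x Wf x * Ki x y).
  rewrite exchange_big; apply: eq_bigr => y _; rewrite mulr_sumr; apply: eq_bigr => x _; ring.
have G1 : Cfun w1 w2 * \sum_y Bf y * (\sum_x Wf x * Ki x y)
    = w1 * w2 * S0 + \sum_x bndw x * (\sum_y Ki x y * Bf y).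
  rewrite mulr_sumr.
  have e : forall y, Cfun w1 w2 * (Bf y * \sum_x Wf x * Ki x y) = Bf y * (w1 * w2 * Vf y + \sum_x bndw x * Ki x y).
    by move=> y; rewrite -L1; ring.
  under eq_bigr => y _ do rewrite e.
  under eq_bigr => y _ do rewrite mulrDr.
  rewrite big_split /=; congr (_ + _).
    rewrite /S0 mulr_sumr; apply: eq_bigr => y _; ring.
  under eq_bigr => y _ do rewrite mulr_sumr.
  rewrite exchange_big; apply: eq_bigr => x _; rewrite mulr_sumr; apply: eq_bigr => y _; ring.
rewrite G' (_ : Cfun w1 w2 * Cfun b1 b2 * _ = Cfun b1 b2 * (Cfun w1 w2 * \sum_y Bf y * (\sum_x Wf x * Ki x y))); last ring.
rewrite G1 mulrDr mulr_sumr; congr (_ + _); apply: eq_bigr => x _.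
rewrite -L2; ring.
Qed.

Lemma S0E : S0 = b2 * w2 * fpoly n.+1 (X1 * Y1) * fpoly n (X2 * Y2).
Proof.
rewrite /S0 sumIdx /Bf /Vf /fpoly /= [RHS]mulrC mulr_suml; apply: eq_bigr => p _.
rewrite mulr_sumr mulr_sumr; apply: eq_bigr => q _; rewrite !exprMn; ring.
Qed.

Lemma sum_bnd_nat (al be : F) (h : nat -> F) :
  \sum_(c < n.+1) (ind ((c : nat) == 0%N) al + ind ((c : nat) == n) be) * h c = al * h 0%N + be * h n.
Proof.
under eq_bigr => c _ do rewrite mulrDl !(mulrC (ind _ _)) !(@mul_ind F).
rewrite big_split /= (@sum_ind F n.+1 0%N (fun c => h c * al)) (@sum_ind F n.+1 n (fun c => h c * be)).
by rewrite /ind ltn0Sn ltnSn; ring.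
Qed.

Lemma sum_bnd_ord (al be : F) (h : 'I_n.+1 -> F) :
  \sum_(c < n.+1) (ind ((c : nat) == 0%N) al + ind ((c : nat) == n) be) * h c = al * h ord0 + be * h ord_max.
Proof.
under eq_bigr => c _ do rewrite mulrDl.
rewrite big_split /=; congr (_ + _).
  rewrite big_ord_recl /= big1 ?addr0 //.
  by move=> i _; rewrite /ind /= mul0r.
rewrite big_ord_recr /= big1; last first.
  move=> i _; rewrite /ind /=; have := ltn_ord i.
  by case: eqP => [->|_ _]; [rewrite ltnn | rewrite mul0r].
by rewrite add0r /ind eqxx.
Qed.

Lemma T1E : \sum_x bndw x * (b1 * b2 * Uf x) =
  (1 + 'i * X1) * (Y1 * (b2 * w1 * fpoly n (Y1 * X1))) +
  ('i + X1) * X2 * (Y1 * (b2 * Y2 ^+ n) * w1 * X2 ^+ n * fpoly n (Y1 * X1)).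
Proof.
rewrite sumIdx /bndw /Uf /=.
under eq_bigr => a _ do rewrite (sum_bnd_nat _ _ (fun c => b1 * b2 * (b1 * Y1 ^+ a * Y2 ^+ c))).
rewrite /fpoly !mulr_sumr -big_split /=; apply: eq_bigr => a _.
rewrite !exprMn !expr0; ring.
Qed.

Lemma outerE (f : Idx n -> F) : \sum_x bndw x * f x =
  \sum_(a < n) (w1 * X1 ^+ a * (1 + 'i * X1) * f (a, ord0) + ('i + X1) * X2 * (w1 * X1 ^+ a * X2 ^+ n) * f (a, ord_max)).
Proof.
rewrite sumIdx; apply: eq_bigr => a _.
by rewrite /bndw /= (sum_bnd_ord _ _ (fun c => f (a, c))).
Qed.

Lemma innerE (x : Idx n) : \sum_y Ki x y * bndb y =
  \sum_(p < n) (Ki x (p, ord0) * ((1 + 'i * Y2) * (b2 * Y2 ^+ p)) + Ki x (p, ord_max) * (Y1 * ('i + Y2) * (Y1 ^+ n * b2 * Y2 ^+ p))).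
Proof.
rewrite sumIdx; apply: eq_bigr => p _.
under eq_bigr => q _ do rewrite mulrC.
rewrite /bndb /= (sum_bnd_ord _ _ (fun q => Ki x (p, q))); ring.
Qed.

Lemma HnE k l : Hn n k l w1 w2 b1 b2 = \sum_(a < n) \sum_(p < n)
  Ki (a, if k then ord_max else ord0) (p, if l then ord_max else ord0) *
  (w1 * X1 ^+ a * (if k then X2 ^+ n else 1) * (if l then Y1 ^+ n else 1) * (b2 * Y2 ^+ p)).
Proof.
rewrite /Hn; apply: eq_bigr => a _; apply: eq_bigr => p _.
case: k; case: l; rewrite /= ?muln1 ?muln0 ?expr0 !ex1 ?ex2; ring.
Qed.

Lemma T2E : \sum_x bndw x * (\sum_y Ki x y * bndb y) =
  (1 + 'i * X1) * (1 + 'i * Y2) * Hn n false false w1 w2 b1 b2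
  + (1 + 'i * X1) * (Y1 * ('i + Y2)) * Hn n false true w1 w2 b1 b2
  + ('i + X1) * X2 * (1 + 'i * Y2) * Hn n true false w1 w2 b1 b2
  + ('i + X1) * X2 * (Y1 * ('i + Y2)) * Hn n true true w1 w2 b1 b2.
Proof.
rewrite outerE; under eq_bigr => a _ do rewrite !innerE.
rewrite !HnE /= !mulr_sumr -!big_split /=; apply: eq_bigr => a _.
rewrite !mulr_sumr -!big_split /=; apply: eq_bigr => p _; ring.
Qed.
End Main.



Theorem lemma3p3 (F : numClosedFieldType) (n : nat) (w1 w2 b1 b2 : F) :
  (1 <= n)%N ->
  Cfun w1 w2 != 0 -> Cfun b1 b2 != 0 ->
  KastMx F n \in unitmx /\
  Gn n w1 w2 b1 b2 =
    w1 * w2 ^+ 2 * b2 * fpoly n.+1 (w1 ^+ 2 * b1 ^+ 2) * fpoly n (w2 ^+ 2 * b2 ^+ 2)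
      / Cfun w1 w2
    + (1 + 'i * w1 ^+ 2) *
      (((1 + 'i * b2 ^+ 2) * Hn n false false w1 w2 b1 b2
        + b1 ^+ 2 * (b2 * w1 * fpoly n (b1 ^+ 2 * w1 ^+ 2)
                     + ('i + b2 ^+ 2) * Hn n false true w1 w2 b1 b2))
       / (Cfun w1 w2 * Cfun b1 b2))
    + ('i + w1 ^+ 2) * w2 ^+ 2 *
      ((b1 ^+ 2 * b2 ^+ (2 * n + 1) * w1 * w2 ^+ (2 * n) * fpoly n (b1 ^+ 2 * w1 ^+ 2)
        + (1 + 'i * b2 ^+ 2) * Hn n true false w1 w2 b1 b2
        + b1 ^+ 2 * ('i + b2 ^+ 2) * Hn n true true w1 w2 b1 b2)
       / (Cfun w1 w2 * Cfun b1 b2)).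
Proof.
move=> n1 hw hb.
have U : KastMx F n \in unitmx by case: n n1 => [|m] // _; exact: unitK.
split => //.
apply: (mulfI (mulf_neq0 hw hb)).
rewrite (@G2 F n n1 w1 w2 b1 b2 U).
under eq_bigr => x _ do rewrite mulrDr.
rewrite big_split /= (@T1E F n w1 w2 b1 b2) (@T2E F n w1 w2 b1 b2) (@S0E F n w1 w2 b1 b2) (ex1 F b2) (ex2 F w2).
field; by rewrite hw hb.
Qed.
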